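(* Let $\langle H,\epsilon\rangle$ be a copointed functor on $\mathcal C$ and $\lambda\colon TH\Rightarrow HT$ a distributive law of $\mathcal T$ over $\langle H,\epsilon\rangle$. (a) The following are equivalent: 1. $Hq_X\circ\lambda_X\circ l_{HX}=Hq_X\circ\lambda_X\circ r_{HX}$ for all $X$ ($\lambda$ preserves $\mathcal E$). 2. There is a distributive law $\lambda'\colon T'H\Rightarrow HT'$ of $\mathcal T'$ over the copointed functor $\langle H,\epsilon\rangle$ such that $q$ is a morphism of distributive laws from $\lambda$ to $\lambda'$; this $\lambda'$ is then unique. (b) If $\lambda$ preserves $\mathcal E$ and $\mathcal K$ is a monad presented by $\Sigma$ and $\mathcal E$ via a monad isomorphism $i\colon T'\Rightarrow K$, then there is a unique distributive law $\kappa$ of $\mathcal K$ over $\langle H,\epsilon\rangle$ such that $i\circ q\colon\lambda\Rightarrow\kappa$ is a morphism of distributive laws.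
   Context: Let $\mathcal C$ be a category and $\Sigma$ an endofunctor on $\mathcal C$. Let $\mathcal T=\langle T,\eta,\mu\rangle$ be the free monad over $\Sigma$. Let $\mathcal E=\langle E,l,r\rangle$ be $\mathcal T$-equations: $E$ an endofunctor, $l,r\colon E\Rightarrow T$ natural. Standing assumptions: 1. $\mathrm{Alg}(\mathcal T)$ has coequalizers. 2. The forgetful $U$ and $TU$ send regular epis to epis. 3. $EU$ sends regular epis to epis. The quotient monad $\mathcal T'=\langle T',\eta',\mu'\rangle$ is the monad induced by the left adjoint $X\mapsto\langle TX/\mathcal E,\mu_X/\mathcal E\rangle$ of the forgetful functor from the category of $\mathcal T$-algebras satisfying $\mathcal E$ (those with $\alpha\circ l_A=\alpha\circ r_A$) to $\mathcal C$. Here $\langle TX/\mathcal E,\mu_X/\mathcal E\rangle$ is the codomain of the coequalizer $s$ in $\mathrm{Alg}(\mathcal T)$ of $\mu_X\circ\mu_{TX}\circ Tl_{TX}$ and $\mu_X\circ\mu_{TX}\circ Tr_{TX}$. We set $q_X=Us_{\langle TX,\mu_X\rangle}\colon TX\to T'X$, a monad morphism. A monad $\mathcal K$ is presented by $\Sigma$ and $\mathcal E$ if there is a monad isomorphism $T'\Rightarrow K$. A copointed functor is a pair $\langle H,\epsilon\rangle$ with $H$ an endofunctor and $\epsilon\colon H\Rightarrow\mathrm{Id}$ natural. A distributive law of a monad $\langle K,\theta,\nu\rangle$ over $H$ is a natural $\kappa\colon KH\Rightarrow HK$ with $\kappa\circ\theta_H=H\theta$ and $\kappa\circ\nu_H=H\nu\circ\kappa_K\circ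 K\kappa$. It is a distributive law over the copointed functor $\langle H,\epsilon\rangle$ if moreover $\epsilon_K\circ\kappa=K\epsilon$. A morphism of distributive laws $\tau\colon\lambda\Rightarrow\kappa$ is a monad morphism $\tau$ with $\kappa\circ\tau_H=H\tau\circ\lambda$. *)

(* Defs.v *)
Set Implicit Arguments.
Unset Strict Implicit.

Record Category := {
  Ob :> Type;
  Hom : Ob -> Ob -> Type;
  idm : forall A : Ob, Hom A A;
  comp : forall A B D : Ob, Hom B D -> Hom A B -> Hom A D;
  comp_id_l : forall A B (f : Hom A B), comp (idm B) f = f;
  comp_id_r : forall A B (f : Hom A B), comp f (idm A) = f;
  comp_assoc : forall A B D E (h : Hom D E) (g : Hom B D) (f : Hom A B),
      comp h (comp g f) = comp (comp h g) f }.

Arguments Hom {c} _ _.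
Arguments idm {c} A.
Arguments comp {c A B D} _ _.

Notation "g ∘ f" := (comp g f) (at level 40, left associativity).

Record Endo (C : Category) := {
  fob :> C -> C;
  fmap : forall A B : C, Hom A B -> Hom (fob A) (fob B);
  fmap_id : forall A : C, fmap (idm A) = idm (fob A);
  fmap_comp : forall (A B D : C) (g : Hom B D) (f : Hom A B),
      fmap (g ∘ f) = fmap g ∘ fmap f }.

Arguments fmap {C} e {A B} _.

Unset Implicit Arguments.

Definition is_nat (C : Category) (F G : Endo C) (a : forall X : C, Hom (F X) (G X)) : Prop :=
  forall (X Y : C) (f : Hom X Y), fmap G f ∘ a X = a Y ∘ fmap F f.
Arguments is_nat {C} F G a.

Record Monad (C : Category) := {
  mF :> Endo C;
  unit : forall X : C, Hom X (mF X);
  mult : forall X : C, Hom (mF (mF X)) (mF X);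
  unit_nat : forall (X Y : C) (f : Hom X Y), fmap mF f ∘ unit X = unit Y ∘ f;
  mult_nat : forall (X Y : C) (f : Hom X Y),
      fmap mF f ∘ mult X = mult Y ∘ fmap mF (fmap mF f);
  mult_unit_l : forall X : C, mult X ∘ unit (mF X) = idm (mF X);
  mult_unit_r : forall X : C, mult X ∘ fmap mF (unit X) = idm (mF X);
  mult_assoc : forall X : C, mult X ∘ mult (mF X) = mult X ∘ fmap mF (mult X) }.

Arguments unit {C} m X.
Arguments mult {C} m X.

Definition is_epi (C : Category) (A B : C) (e : Hom A B) : Prop :=
  forall (Z : C) (u v : Hom B Z), u ∘ e = v ∘ e -> u = v.
Arguments is_epi {C A B} e.

Definition is_iso (C : Category) (A B : C) (f : Hom A B) : Prop :=
  exists g : Hom B A, g ∘ f = idm A /\ f ∘ g = idm B.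
Arguments is_iso {C A B} f.

(** * The free monad over an endofunctor [Sig]:
    each [T X] carries a Sig-algebra structure [tau X] making
    [(T X, tau X)] together with [unit T X] the free Sig-algebra on [X];
    the functor action and multiplication of [T] are Sig-algebra
    homomorphisms (hence are the ones induced by freeness). *)
Definition is_free_monad (C : Category) (Sig : Endo C) (T : Monad C) : Prop :=
  exists tau : forall X : C, Hom (Sig (T X)) (T X),
    (forall (X A : C) (a : Hom (Sig A) A) (f : Hom X A),
        exists! g : Hom (T X) A, g ∘ unit T X = f /\ g ∘ tau X = a ∘ fmap Sig g)
    /\ (forall (X Y : C) (f : Hom X Y), fmap T f ∘ tau X = tau Y ∘ fmap Sig (fmap T f))
    /\ (forall X : C, mult T X ∘ tau (T X) = tau X ∘ fmap Sig (mult T X)).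
Arguments is_free_monad {C} Sig T.

Definition is_alg (C : Category) (T : Monad C) (A : C) (a : Hom (T A) A) : Prop :=
  a ∘ unit T A = idm A /\ a ∘ mult T A = a ∘ fmap T a.
Arguments is_alg {C} T {A} a.

Definition is_alg_hom (C : Category) (T : Monad C) (A B : C)
  (a : Hom (T A) A) (b : Hom (T B) B) (h : Hom A B) : Prop :=
  h ∘ a = b ∘ fmap T h.
Arguments is_alg_hom {C} T {A B} a b h.

Definition is_alg_coeq (C : Category) (T : Monad C) (A B Q : C)
  (a : Hom (T A) A) (b : Hom (T B) B) (c : Hom (T Q) Q)
  (f g : Hom A B) (s : Hom B Q) : Prop :=
  is_alg T c /\ is_alg_hom T b c s /\ s ∘ f = s ∘ g /\
  forall (D : C) (d : Hom (T D) D) (h : Hom B D),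
    is_alg T d -> is_alg_hom T b d h -> h ∘ f = h ∘ g ->
    exists! k : Hom Q D, is_alg_hom T c d k /\ k ∘ s = h.
Arguments is_alg_coeq {C} T {A B Q} a b c f g s.

Definition alg_has_coequalizers (C : Category) (T : Monad C) : Prop :=
  forall (A B : C) (a : Hom (T A) A) (b : Hom (T B) B) (f g : Hom A B),
    is_alg T a -> is_alg T b -> is_alg_hom T a b f -> is_alg_hom T a b g ->
    exists (Q : C) (c : Hom (T Q) Q) (s : Hom B Q), is_alg_coeq T a b c f g s.
Arguments alg_has_coequalizers {C} T.

Definition is_alg_regular_epi (C : Category) (T : Monad C) (B Q : C)
  (b : Hom (T B) B) (c : Hom (T Q) Q) (s : Hom B Q) : Prop :=
  is_alg T b /\ is_alg T c /\ is_alg_hom T b c s /\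
  exists (A : C) (a : Hom (T A) A) (f g : Hom A B),
    is_alg T a /\ is_alg_hom T a b f /\ is_alg_hom T a b g /\ is_alg_coeq T a b c f g s.
Arguments is_alg_regular_epi {C} T {B Q} b c s.

(** [F ∘ U] sends regular epis of Alg(T) to epis of C
    ([F] = identity gives the condition on [U]). *)
Definition U_regepi_to_epi (C : Category) (T : Monad C) : Prop :=
  forall (B Q : C) (b : Hom (T B) B) (c : Hom (T Q) Q) (s : Hom B Q),
    is_alg_regular_epi T b c s -> is_epi s.
Arguments U_regepi_to_epi {C} T.

Definition FU_regepi_to_epi (C : Category) (T : Monad C) (F : Endo C) : Prop :=
  forall (B Q : C) (b : Hom (T B) B) (c : Hom (T Q) Q) (s : Hom B Q),
    is_alg_regular_epi T b c s -> is_epi (fmap F s).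
Arguments FU_regepi_to_epi {C} T F.

(** * The quotient monad T' = T/E with [q : T => T'].
    [T'] is the monad induced by the left adjoint
    [X |-> <TX/E, mu_X/E>] built from (some choice of) coequalizers
    [s = q_X] in Alg(T).  Concretely, for every [X]:
    - [q X : (TX, mult T X) -> (T'X, rho X)] is a coequalizer in Alg(T) of
      [mult T X ∘ mult T (T X) ∘ fmap T (l (T X))] and the same with [r],
      where [rho X = mult T' X ∘ q (T' X)] (the T-algebra structure of the
      free E-algebra, = [U] of the counit composed with [q]);
    - the unit of [T'] is the adjunction unit [q X ∘ unit T X];
    - the functor action of [T'] is the one induced on the quotients
      ([q] natural).
    These data determine [T'] (functor, unit, multiplication) uniquely from
    the chosen coequalizers, i.e. they say exactly that [T'] is the induced
    monad. *)
Definition is_quotient_monad (C : Category) (T : Monad C) (E : Endo C)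
  (l r : forall X : C, Hom (E X) (T X)) (T' : Monad C)
  (q : forall X : C, Hom (T X) (T' X)) : Prop :=
  (forall X : C,
      is_alg_coeq T (mult T (E (T X))) (mult T X) (mult T' X ∘ q (T' X))
        (mult T X ∘ mult T (T X) ∘ fmap T (l (T X)))
        (mult T X ∘ mult T (T X) ∘ fmap T (r (T X)))
        (q X))
  /\ (forall X : C, unit T' X = q X ∘ unit T X)
  /\ is_nat T T' q.
Arguments is_quotient_monad {C} T E l r T' q.

Definition is_copointed (C : Category) (H : Endo C) (eps : forall X : C, Hom (H X) X) : Prop :=
  forall (X Y : C) (f : Hom X Y), f ∘ eps X = eps Y ∘ fmap H f.
Arguments is_copointed {C} H eps.

Definition is_distr_law (C : Category) (K : Monad C) (H : Endo C)
  (k : forall X : C, Hom (K (H X)) (H (K X))) : Prop :=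
  (forall (X Y : C) (f : Hom X Y), fmap H (fmap K f) ∘ k X = k Y ∘ fmap K (fmap H f))
  /\ (forall X : C, k X ∘ unit K (H X) = fmap H (unit K X))
  /\ (forall X : C, k X ∘ mult K (H X) = fmap H (mult K X) ∘ k (K X) ∘ fmap K (k X)).
Arguments is_distr_law {C} K H k.

Definition is_distr_law_copointed (C : Category) (K : Monad C) (H : Endo C)
  (eps : forall X : C, Hom (H X) X) (k : forall X : C, Hom (K (H X)) (H (K X))) : Prop :=
  is_distr_law K H k /\ (forall X : C, eps (K X) ∘ k X = fmap K (eps X)).
Arguments is_distr_law_copointed {C} K H eps k.

Definition is_monad_morphism (C : Category) (S K : Monad C)
  (t : forall X : C, Hom (S X) (K X)) : Prop :=
  is_nat S K t
  /\ (forall X : C, t X ∘ unit S X = unit K X)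
  /\ (forall X : C, t X ∘ mult S X = mult K X ∘ t (K X) ∘ fmap S (t X)).
Arguments is_monad_morphism {C} S K t.

Definition is_monad_iso (C : Category) (S K : Monad C)
  (t : forall X : C, Hom (S X) (K X)) : Prop :=
  is_monad_morphism S K t /\ (forall X : C, is_iso (t X)).
Arguments is_monad_iso {C} S K t.

Definition is_distr_law_morphism (C : Category) (S K : Monad C) (H : Endo C)
  (lam : forall X : C, Hom (S (H X)) (H (S X)))
  (k : forall X : C, Hom (K (H X)) (H (K X)))
  (t : forall X : C, Hom (S X) (K X)) : Prop :=
  is_monad_morphism S K t /\ (forall X : C, k X ∘ t (H X) = fmap H (t X) ∘ lam X).
Arguments is_distr_law_morphism {C} S K H lam k t.

Definition preserves_eqs (C : Category) (T : Monad C) (E : Endo C)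
  (l r : forall X : C, Hom (E X) (T X)) (T' : Monad C)
  (q : forall X : C, Hom (T X) (T' X)) (H : Endo C)
  (lam : forall X : C, Hom (T (H X)) (H (T X))) : Prop :=
  forall X : C, fmap H (q X) ∘ lam X ∘ l (H X) = fmap H (q X) ∘ lam X ∘ r (H X).
Arguments preserves_eqs {C} T E l r T' q H lam.

(* Main.v *)
Require Import Defs.
From Stdlib Require Import FunctionalExtensionality IndefiniteDescription.
Lemma assoc_eq {C:Category} {A B D B' : C} {a : Hom B D} {b : Hom A B} {c: Hom B' D} {d : Hom A B'} :
  a ∘ b = c ∘ d -> forall Z (x : Hom Z A), a ∘ (b ∘ x) = c ∘ (d ∘ x).
Proof. intros e Z x. rewrite !comp_assoc, e. reflexivity. Qed.

Lemma assoc_id {C:Category} {A B : C} {a : Hom B A} {b : Hom A B} :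
  a ∘ b = idm A -> forall Z (x : Hom Z A), a ∘ (b ∘ x) = x.
Proof. intros e Z x. rewrite comp_assoc, e, comp_id_l. reflexivity. Qed.

Ltac nrm := repeat rewrite ?fmap_comp, ?fmap_id, ?comp_id_l, ?comp_id_r; repeat rewrite <- comp_assoc.
Ltac rw e := first [rewrite (assoc_eq e) | rewrite (assoc_id e) | rewrite e].
Ltac rwb e := first [rewrite <- (assoc_eq e) | rewrite <- e].

Lemma fmap_eq {C:Category} (F : Endo C) {A B D B' : C} {a : Hom B D} {b : Hom A B} {c: Hom B' D} {d : Hom A B'} :
  a ∘ b = c ∘ d -> fmap F a ∘ fmap F b = fmap F c ∘ fmap F d.
Proof. intros e. rewrite <- !fmap_comp, e. reflexivity. Qed.

Lemma epi_comp {C : Category} {A B D : C} (f : Hom A B) (g : Hom B D) :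
  is_epi f -> is_epi g -> is_epi (g ∘ f).
Proof. intros hf hg Z u v e. apply hg, hf. rewrite <- !comp_assoc. exact e. Qed.

Lemma transfer (C : Category) (S K : Monad C) (H : Endo C) eps (Heps: is_copointed H eps)
  lam (Hlam : is_distr_law_copointed S H eps lam) t (Ht : is_monad_morphism S K t)
  (Hepi1 : forall X, is_epi (t X)) (Hepi2 : forall X, is_epi (t (K X) ∘ fmap S (t X)))
  kap (Hk : forall X, kap X ∘ t (H X) = fmap H (t X) ∘ lam X) : is_distr_law_copointed K H eps kap.
Proof.
  destruct Hlam as [[Ln [Lu Lm]] Le]. destruct Ht as [Tn [Tu Tm]].
  assert (Tm' : forall X, t X ∘ mult S X = mult K X ∘ (t (K X) ∘ fmap S (t X))) by (intros; rewrite Tm; nrm; reflexivity).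
  assert (Lm' : forall X, lam X ∘ mult S (H X) = fmap H (mult S X) ∘ (lam (S X) ∘ fmap S (lam X))) by (intros; rewrite Lm; nrm; reflexivity).
  split; [split; [|split]|].
  - intros X Y f. apply (Hepi1 (H X)). nrm.
    rw (Hk X). rw (fmap_eq H (Tn _ _ f)). rw (Ln X Y f).
    rw (Tn _ _ (fmap H f)). rw (Hk Y). nrm. reflexivity.
  - intros X. rewrite <- Tu. nrm. rw (Hk X). rw (Lu X). rewrite <- fmap_comp, Tu. reflexivity.
  - intros X. apply (Hepi2 (H X)). nrm.
    rewrite <- Tm'. rw (Hk X). rw (Lm' X). rw (fmap_eq H (Tm' X)). nrm.
    rw (Tn _ _ (kap X)). rw (fmap_eq S (Hk X)). rw (Hk (K X)). nrm.
    rw (Ln _ _ (t X)). reflexivity.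
  - intros X. apply (Hepi1 (H X)). nrm. rw (Hk X). rwb (Heps _ _ (t X)). rw (Le X). symmetry. apply Tn.
Qed.


Lemma free_alg (C : Category) (T : Monad C) X : is_alg T (mult T X).
Proof. split; [apply mult_unit_l | apply mult_assoc]. Qed.

Lemma fk_hom (C : Category) (T : Monad C) X Y (k : Hom Y (T (T X))) :
  is_alg_hom T (mult T Y) (mult T X) (mult T X ∘ mult T (T X) ∘ fmap T k).
Proof.
  unfold is_alg_hom. nrm.
  rw (mult_nat C T _ _ k). rw (mult_assoc C T X). rw (mult_nat C T _ _ (mult T X)).
  rw (mult_assoc C T X). rw (fmap_eq T (mult_assoc C T X)). reflexivity.
Qed.

Lemma q_props (C : Category) (T : Monad C) E l r (Hl : is_nat E T l) (Hr : is_nat E T r)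
  T' q (Hq : is_quotient_monad T E l r T' q) (HU : U_regepi_to_epi T) (HTU : FU_regepi_to_epi T T) :
  is_monad_morphism T T' q /\ (forall X, is_epi (q X)) /\ (forall X, is_epi (fmap T (q X)))
  /\ (forall X, q X ∘ l X = q X ∘ r X).
Proof.
  destruct Hq as [Hco [Hun Hnat]].
  assert (Hre : forall X, is_alg_regular_epi T (mult T X) (mult T' X ∘ q (T' X)) (q X)).
  { intros X. destruct (Hco X) as [Halg [Hhom [Heq Huniv]]].
    split; [apply free_alg|split; [exact Halg|split; [exact Hhom|]]].
    exists (T (E (T X))), (mult T (E (T X))), (mult T X ∘ mult T (T X) ∘ fmap T (l (T X))), (mult T X ∘ mult T (T X) ∘ fmap T (r (T X))).
    split; [apply free_alg|split; [apply fk_hom|split; [apply fk_hom|]]].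
    exact (Hco X). }
  split; [split; [exact Hnat|split]|split; [|split]].
  - intros X; symmetry; apply Hun.
  - intros X. destruct (Hco X) as [Halg [Hhom [Heq Huniv]]]. exact Hhom.
  - intros X. exact (HU _ _ _ _ _ (Hre X)).
  - intros X. exact (HTU _ _ _ _ _ (Hre X)).
  - intros X. destruct (Hco X) as [Halg [Hhom [Heq Huniv]]].
    assert (G : forall k : forall Y, Hom (E Y) (T Y), is_nat E T k ->
       (mult T X ∘ mult T (T X) ∘ fmap T (k (T X))) ∘ (unit T (E (T X)) ∘ fmap E (unit T X)) = k X).
    { intros k Hk. nrm. rw (unit_nat C T _ _ (k (T X))). rw (mult_unit_l C T (T X)).
      rwb (Hk _ _ (unit T X)). rw (mult_unit_r C T X). reflexivity. }
    rewrite <- (G l Hl), <- (G r Hr). pose proof (f_equal (fun z => z ∘ (unit T (E (T X)) ∘ fmap E (unit T X))) Heq) as Heq'.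
    simpl in Heq'. repeat rewrite <- comp_assoc in Heq'. nrm. exact Heq'.
Qed.


Lemma coeq_free (C : Category) (T : Monad C) (Y D : C) (d : Hom (T D) D) (Hd : is_alg T d)
  (h : Hom (T Y) D) (Hh : is_alg_hom T (mult T Y) d h) Z (m : Hom Z (T (T Y))) :
  h ∘ (mult T Y ∘ mult T (T Y) ∘ fmap T m) = d ∘ fmap T (h ∘ mult T Y ∘ m).
Proof.
  unfold is_alg_hom in Hh. destruct Hd as [_ Hd].
  nrm. rw Hh. rw (mult_nat C T _ _ h). rw Hd. rw (fmap_eq T Hh). reflexivity.
Qed.

Lemma lift_alg (C : Category) (T : Monad C) (H : Endo C) lam (Hlam : is_distr_law T H lam)
  A (a : Hom (T A) A) : is_alg T a -> is_alg T (fmap H a ∘ lam A).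
Proof.
  destruct Hlam as [Ln [Lu Lm]]. intros [Ha1 Ha2]. split.
  - nrm. rw (Lu A). rewrite <- fmap_comp, Ha1, fmap_id. reflexivity.
  - nrm. rewrite Lm. nrm. rw (fmap_eq H Ha2). nrm. rw (Ln _ _ a). reflexivity.
Qed.

Lemma mm_comp (C : Category) (S K L : Monad C) t u :
  is_monad_morphism S K t -> is_monad_morphism K L u -> is_monad_morphism S L (fun X => u X ∘ t X).
Proof.
  intros [Tn [Tu Tm]] [Un [Uu Um]].
  split; [|split].
  - intros X Y f. nrm. rw (Un _ _ f). rw (Tn _ _ f). reflexivity.
  - intros X. nrm. rw (Tu X). exact (Uu X).
  - intros X. nrm. rewrite Tm. nrm. rw (Um X). nrm. rw (Tn _ _ (u X)). reflexivity.
Qed.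

Lemma iso_epi (C : Category) (A B : C) (f : Hom A B) : is_iso f -> is_epi f.
Proof.
  intros [g [H1 H2]] Z u v e.
  rewrite <- (comp_id_r u), <- (comp_id_r v), <- H2, !comp_assoc, e. reflexivity.
Qed.

Lemma fmap_iso (C : Category) (F : Endo C) (A B : C) (f : Hom A B) : is_iso f -> is_iso (fmap F f).
Proof.
  intros [g [H1 H2]]. exists (fmap F g). rewrite <- !fmap_comp, H1, H2, !fmap_id. split; reflexivity.
Qed.


Theorem proposition4p10
  (C : Category) (Sig : Endo C) (T : Monad C) (HTfree : is_free_monad Sig T)
  (E : Endo C) (l r : forall X : C, Hom (E X) (T X))
  (Hl : is_nat E T l) (Hr : is_nat E T r)
  (Hcoeq : alg_has_coequalizers T)
  (HU : U_regepi_to_epi T) (HTU : FU_regepi_to_epi T T)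
  (HEU : FU_regepi_to_epi T E)
  (T' : Monad C) (q : forall X : C, Hom (T X) (T' X))
  (Hq : is_quotient_monad T E l r T' q)
  (H : Endo C) (eps : forall X : C, Hom (H X) X) (Heps : is_copointed H eps)
  (lam : forall X : C, Hom (T (H X)) (H (T X)))
  (Hlam : is_distr_law_copointed T H eps lam) :
  (* (a) *)
  ((preserves_eqs T E l r T' q H lam <->
      exists lam' : forall X : C, Hom (T' (H X)) (H (T' X)),
        is_distr_law_copointed T' H eps lam' /\ is_distr_law_morphism T T' H lam lam' q)
   /\ (forall lam1 lam2 : forall X : C, Hom (T' (H X)) (H (T' X)),
        is_distr_law_copointed T' H eps lam1 -> is_distr_law_morphism T T' H lam lam1 q ->
        is_distr_law_copointed T' H eps lam2 -> is_distr_law_morphism T T' H lam lam2 q ->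
        lam1 = lam2))
  /\
  (* (b) *)
  (preserves_eqs T E l r T' q H lam ->
   forall (K : Monad C) (i : forall X : C, Hom (T' X) (K X)),
     is_monad_iso T' K i ->
     exists! kappa : forall X : C, Hom (K (H X)) (H (K X)),
       is_distr_law_copointed K H eps kappa
       /\ is_distr_law_morphism T K H lam kappa (fun X => i X ∘ q X)).
Proof.
  destruct (q_props C T E l r Hl Hr T' q Hq HU HTU) as [Qmm [Qepi [QTepi Qlr]]].
  assert (Qepi2 : forall X, is_epi (q (T' X) ∘ fmap T (q X))) by (intros; apply epi_comp; auto).
  pose proof Qmm as [Qn [Qu Qm]].
  assert (Qm' : forall X, q X ∘ mult T X = mult T' X ∘ (q (T' X) ∘ fmap T (q X)))
    by (intros; rewrite Qm; nrm; reflexivity).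
  pose proof Hlam as [[Ln [Lu Lm]] Le].
  assert (Lm' : forall X, lam X ∘ mult T (H X) = fmap H (mult T X) ∘ (lam (T X) ∘ fmap T (lam X)))
    by (intros; rewrite Lm; nrm; reflexivity).
  assert (Aex : preserves_eqs T E l r T' q H lam ->
    exists lam' : forall X : C, Hom (T' (H X)) (H (T' X)),
        is_distr_law_copointed T' H eps lam' /\ is_distr_law_morphism T T' H lam lam' q).
  { intros Hpres.
    assert (Hk : forall X, exists k : Hom (T' (H X)) (H (T' X)), k ∘ q (H X) = fmap H (q X) ∘ lam X).
    { intros X. destruct (proj1 Hq (H X)) as [_ [_ [_ Huniv]]].
      destruct (proj1 Hq X) as [Halg _].
      assert (Hd : is_alg T (fmap H (mult T' X ∘ q (T' X)) ∘ lam (T' X)))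
        by (apply lift_alg; [exact (proj1 Hlam) | exact Halg]).
      assert (Hh : is_alg_hom T (mult T (H X)) (fmap H (mult T' X ∘ q (T' X)) ∘ lam (T' X)) (fmap H (q X) ∘ lam X)).
      { unfold is_alg_hom. nrm. rw (Lm' X). rw (fmap_eq H (Qm' X)). nrm. rw (Ln _ _ (q X)). reflexivity. }
      edestruct (Huniv (H (T' X)) (fmap H (mult T' X ∘ q (T' X)) ∘ lam (T' X)) (fmap H (q X) ∘ lam X) Hd Hh)
        as [k [[_ Hk] _]].
      - rewrite (coeq_free C T _ _ _ Hd _ Hh _ (l (T (H X)))), (coeq_free C T _ _ _ Hd _ Hh _ (r (T (H X)))).
        assert (Q2 : q X ∘ mult T X = (mult T' X ∘ fmap T' (q X)) ∘ q (T X)).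
        { rewrite Qm'. nrm. rewrite (Qn _ _ (q X)). reflexivity. }
        assert (Pr : forall Z (x : Hom Z (E (H (T X)))),
          fmap H (q (T X)) ∘ (lam (T X) ∘ (l (H (T X)) ∘ x)) = fmap H (q (T X)) ∘ (lam (T X) ∘ (r (H (T X)) ∘ x))).
        { intros Z x. rewrite !comp_assoc. rewrite (Hpres (T X)). reflexivity. }
        assert (key : fmap H (q X) ∘ lam X ∘ mult T (H X) ∘ l (T (H X)) = fmap H (q X) ∘ lam X ∘ mult T (H X) ∘ r (T (H X))).
        { nrm. rw (Lm' X). rw (Lm' X). nrm. rw (Hl _ _ (lam X)). rw (Hr _ _ (lam X)). rw (fmap_eq H Q2). rw (fmap_eq H Q2). nrm. rewrite Pr. reflexivity. }
        rewrite key. reflexivity.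
      - exists k; exact Hk. }
    exists (fun X => proj1_sig (constructive_indefinite_description _ (Hk X))).
    assert (Hk' : forall X, proj1_sig (constructive_indefinite_description _ (Hk X)) ∘ q (H X) = fmap H (q X) ∘ lam X)
      by (intros X; exact (proj2_sig (constructive_indefinite_description _ (Hk X)))).
    split.
    - exact (transfer C T T' H eps Heps lam Hlam q Qmm Qepi Qepi2 _ Hk').
    - split; [exact Qmm | exact Hk']. }
  split; [split; [split|] |].
  - exact Aex.
  - intros [lam' [_ [_ Hk]]] X. rewrite <- Hk. rewrite <- !comp_assoc, Qlr. reflexivity.
  - intros lam1 lam2 _ [_ H1] _ [_ H2]. apply functional_extensionality_dep. intros X.
    apply (Qepi (H X)). rewrite H1, H2. reflexivity.
  - intros Hpres K i [Imm Iiso]. destruct (Aex Hpres) as [lam' [Hlam' [_ Hk]]].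
    assert (J : forall X, exists g : Hom (K X) (T' X), g ∘ i X = idm _ /\ i X ∘ g = idm _) by exact Iiso.
    set (j := fun X => proj1_sig (constructive_indefinite_description _ (J X))).
    assert (Hj : forall X, j X ∘ i X = idm _)
      by (intros X; exact (proj1 (proj2_sig (constructive_indefinite_description _ (J X))))).
    assert (Tmm : is_monad_morphism T K (fun X => i X ∘ q X)) by exact (mm_comp C T T' K q i Qmm Imm).
    assert (Tepi : forall X, is_epi (i X ∘ q X))
      by (intros; apply epi_comp; [apply Qepi | apply iso_epi, Iiso]).
    assert (Tepi2 : forall X, is_epi (i (K X) ∘ q (K X) ∘ fmap T (i X ∘ q X))).
    { intros X. rewrite fmap_comp. apply epi_comp; [apply epi_comp|apply Tepi].
      - apply QTepi.
      - apply iso_epi, fmap_iso, Iiso. }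
    set (kappa := fun X => fmap H (i X) ∘ lam' X ∘ j (H X)).
    assert (Hkap : forall X, kappa X ∘ (i (H X) ∘ q (H X)) = fmap H (i X ∘ q X) ∘ lam X).
    { intros X. unfold kappa. nrm. rw (Hj (H X)). rw (Hk X). reflexivity. }
    exists kappa. split.
    + split.
      * exact (transfer C T K H eps Heps lam Hlam _ Tmm Tepi Tepi2 kappa Hkap).
      * split; [exact Tmm | exact Hkap].
    + intros kap2 [_ [_ H2]]. apply functional_extensionality_dep. intros X.
      apply (Tepi (H X)). rewrite Hkap, H2. reflexivity.
Qed.
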